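(* Let $\mathcal{O}$ be the ring of integers of $\mathbb{Q}(\sqrt{-11})$ and $X=\frac12(1+\sqrt{-11})$. Then: (i) $X$ is an $\mathbb{S}[\pm1]$-generator of $\mathcal{O}$, i.e. every element of $\mathcal{O}$ can be written uniquely as a finite sum $\sum_j\alpha_jX^j$ with $\alpha_j\in\{-1,0,1\}$, and its hold is given by $1+1=-1+X-X^2$; (ii) with $R_m=\mathcal{O}/X^m\mathcal{O}$, the projective limit $\varprojlim_m R_m$ is the ring $W(\mathbb{F}_3)=\mathbb{Z}_3$.
   Context: $W(\mathbb{F}_3)$ is the ring of $3$-typical Witt vectors of $\mathbb{F}_3$, identified with the $3$-adic integers $\mathbb{Z}_3$. The hold records, for each $\xi\in\{\pm1\}$, the unique representation of $\xi+1$ as such a sum; here the only nontrivial case is $1+1$. *)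

(* Defs.v *)
From HB Require Import structures.
From mathcomp Require Import all_boot all_order all_algebra all_field.
Set Implicit Arguments. Unset Strict Implicit. Unset Printing Implicit Defensive.
Import Order.TTheory GRing.Theory Num.Theory.
Local Open Scope ring_scope.

Definition sqrtm11 : algC := sqrtC (- 11%:R).
Definition Xg : algC := (1 + sqrtm11) / 2%:R.

Definition inQsqrtm11 (z : algC) : Prop :=
  exists p q : rat, z = ratr p + ratr q * sqrtm11.

Definition inO (z : algC) : Prop := z \in Aint /\ inQsqrtm11 z.

Definition is_digit (a : int) : bool := [|| a == 0, a == 1 | a == -1].

(* A finite digit string s = [:: a_0; ...; a_k] (with no trailing zero,
   so that it represents a finitely supported digit sequence uniquely)  *)
Definition digit_string (s : seq int) : Prop :=
  all is_digit s /\ last 1 s != 0.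

Definition evalX (s : seq int) : algC :=
  \sum_(j < size s) (s`_j)%:~R * Xg ^+ j.

Definition spm1_generator : Prop :=
  inO Xg /\
  (forall s, digit_string s -> inO (evalX s)) /\
  (forall z, inO z -> exists! s : seq int, digit_string s /\ z = evalX s).

Definition inXmO (m : nat) (z : algC) : Prop :=
  exists w, inO w /\ z = Xg ^+ m * w.

(* compatible families (x_m)_m, x_m in O representing a class of R_m,
   with x_{m+1} = x_m in R_m *)
Definition compatO (x : nat -> algC) : Prop :=
  (forall m, inO (x m)) /\ (forall m, inXmO m (x m.+1 - x m)).
Definition eqO (x y : nat -> algC) : Prop := forall m, inXmO m (x m - y m).

(* ---- Z_3 = W(F_3) = lim Z/3^m Z, via representatives ---- *)
Definition compatZ (x : nat -> int) : Prop :=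
  forall m, (3%:Z ^+ m %| x m.+1 - x m)%Z.
Definition eqZ (x y : nat -> int) : Prop :=
  forall m, (3%:Z ^+ m %| x m - y m)%Z.

(* f induces a ring isomorphism  lim_m O/X^mO  ->  Z_3
   (ring operations on the limits are componentwise) *)
Definition lim_ring_iso (f : (nat -> algC) -> (nat -> int)) : Prop :=
  (forall x, compatO x -> compatZ (f x)) /\
  (forall x y, compatO x -> compatO y -> eqO x y -> eqZ (f x) (f y)) /\
  (forall x y, compatO x -> compatO y ->
     eqZ (f (fun m => x m + y m)) (fun m => f x m + f y m)) /\
  (forall x y, compatO x -> compatO y ->
     eqZ (f (fun m => x m * y m)) (fun m => f x m * f y m)) /\
  eqZ (f (fun _ => 1)) (fun _ => 1) /\
  (forall x y, compatO x -> compatO y -> eqZ (f x) (f y) -> eqO x y) /\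
  (forall z, compatZ z -> exists2 x, compatO x & eqZ (f x) z).

(* Main.v *)
Require Import Defs.
From HB Require Import structures.
From mathcomp Require Import all_boot all_order all_algebra all_field.
From mathcomp Require Import ring zify.
From Stdlib Require Import ClassicalEpsilon.
Import Order.TTheory GRing.Theory Num.Theory.
Local Open Scope ring_scope.
Notation s := sqrtm11.
Lemma s2 : s ^+ 2 = - 11%:R. Proof. exact: sqrtCK. Qed.
Lemma X2 : Xg ^+ 2 = Xg - 3%:R.
Proof.
apply/eqP; rewrite -subr_eq0; rewrite /Xg.
have -> : ((1 + s) / 2%:R) ^+ 2 - ((1 + s) / 2%:R - 3%:R) = (s ^+ 2 + 11%:R) / 4%:R.
  by field. 
by rewrite s2 addNr mul0r.
Qed.
Lemma Xg_Aint : Xg \in Aint.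
Proof.
apply: (@root_monic_Aint ('X^2 - ('X - (3%:R)%:P))).
- by rewrite /root !hornerE X2 subrr.
- rewrite monicE lead_coefDl ?lead_coefXn // size_polyN size_XsubC size_polyXn //.
- apply/polyOverP => i; rewrite !coefE; case: ifP => _; rewrite !(rpredB, rpred_nat, rpred0) //.
Qed.
Lemma s_conj : s^* = - s.
Proof.
have h : (s^* - s) * (s^* + s) = 0.
  have -> : (s^* - s) * (s^* + s) = s^* ^+2 - s^+2 by ring.
  by rewrite -rmorphXn s2 rmorphN rmorph_nat subrr.
move: h => /eqP; rewrite mulf_eq0 => /orP[|]; last by rewrite addr_eq0 => /eqP.
rewrite subr_eq0 => /eqP h.
have : s \is Num.real by rewrite CrealE h.
by rewrite realEsqr s2 oppr_ge0 lern0.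
Qed.

Definition ZX (z : algC) := exists a b : int, z = a%:~R + b%:~R * Xg.

Lemma mulZX (a b c d : int) :
  (a%:~R + b%:~R * Xg) * (c%:~R + d%:~R * Xg) =
  (a * c - 3 * b * d)%:~R + (a * d + b * c + b * d)%:~R * Xg.
Proof.
have -> : (a%:~R + b%:~R * Xg) * (c%:~R + d%:~R * Xg) =
  (a * c - 3 * b * d)%:~R + (a * d + b * c + b * d)%:~R * Xg
  + (b * d)%:~R * (Xg ^+ 2 - (Xg - 3%:R)) by ring.
by rewrite X2 subrr mulr0 addr0.
Qed.

Lemma ZX_int (n : int) : ZX n%:~R.
Proof. by exists n, 0; rewrite mul0r addr0. Qed.
Lemma ZX_X : ZX Xg.
Proof. by exists 0, 1; rewrite mul1r add0r. Qed.
Lemma ZX_add z w : ZX z -> ZX w -> ZX (z + w).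
Proof.
move=> [a [b ->]] [c [d ->]]; exists (a + c), (b + d); ring.
Qed.
Lemma ZX_opp z : ZX z -> ZX (- z).
Proof. move=> [a [b ->]]; exists (- a), (- b); ring. Qed.
Lemma ZX_sub z w : ZX z -> ZX w -> ZX (z - w).
Proof. by move=> hz hw; apply: ZX_add => //; apply: ZX_opp. Qed.
Lemma ZX_mul z w : ZX z -> ZX w -> ZX (z * w).
Proof.
move=> [a [b ->]] [c [d ->]]; rewrite mulZX; by do 2 eexists.
Qed.
Lemma ZX_exp z n : ZX z -> ZX (z ^+ n).
Proof.
move=> hz; elim: n => [|n IH]; first by rewrite expr0; exact: (ZX_int 1).
by rewrite exprS; apply: ZX_mul.
Qed.

Lemma coord0 (a b : int) : a%:~R + b%:~R * Xg = 0 -> a = 0 /\ b = 0.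
Proof.
move=> h.
have : ((a * a + a * b + 3 * b * b)%:~R : algC) = 0.
  have -> : ((a * a + a * b + 3 * b * b)%:~R : algC) =
    (a%:~R + b%:~R * Xg) * (a%:~R + b%:~R - b%:~R * Xg)
     + (b * b)%:~R * (Xg ^+ 2 - (Xg - 3%:R)) by ring.
  by rewrite h X2 subrr mulr0 mul0r addr0.
move/eqP; rewrite intr_eq0 => /eqP H.
nia.
Qed.

Lemma coord_inj (a b c d : int) :
  a%:~R + b%:~R * Xg = c%:~R + d%:~R * Xg -> a = c /\ b = d.
Proof.
move=> h.
have /coord0 [h1 h2] : (a - c)%:~R + (b - d)%:~R * Xg = 0 :> algC.
  rewrite !intrB; apply/eqP; rewrite -subr_eq0 subr0; apply/eqP.
  have -> : a%:~R - c%:~R + (b%:~R - d%:~R) * Xg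
    = (a%:~R + b%:~R * Xg) - (c%:~R + d%:~R * Xg) :> algC by ring.
  by rewrite h subrr.
lia.
Qed.

Lemma s_Aint : s \in Aint.
Proof.
have -> : s = 2%:R * Xg - 1 by rewrite /Xg; field.
apply: rpredB; last exact: rpred1. apply: rpredM; [exact: rpred_nat | exact: Xg_Aint].
Qed.

Lemma int_of (w : algC) : w \in Crat -> w \in Aint -> exists m : int, w = m%:~R.
Proof. by move=> h1 h2; apply/intrP; apply: Cint_rat_Aint. Qed.

Lemma ZX_inO z : ZX z -> inO z.
Proof.
move=> [a [b ->]]; split.
  apply: rpredD; first exact: Aint_int. apply: rpredM; [exact: Aint_int | exact: Xg_Aint].
exists (a%:~R + b%:~R / 2%:R), (b%:~R / 2%:R).
rewrite !(rmorphD, rmorphM, fmorph_div, ratr_int, ratr_nat) /Xg.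
by field.
Qed.

Lemma conjAint z : z \in Aint -> z^* \in Aint.
Proof. by move=> h; rewrite (Aint_aut Num.conj_op). Qed.

Lemma inO_ZX z : inO z -> ZX z.
Proof.
move=> [zA [p [q Ez]]].
move: Ez (Crat_rat p) (Crat_rat q); move: (ratr p) (ratr q) => P Q Ez PC QC.
have Pc : P^* = P by apply: conj_Crat.
have Qc : Q^* = Q by apply: conj_Crat.
have zc : z^* = P - Q * s by rewrite Ez rmorphD rmorphM /= Pc Qc s_conj mulrN.
have zcA : z^* \in Aint by apply: conjAint.
have [T HT] : exists T : int, 2%:R * P = T%:~R.
  apply: int_of; first by apply: rpredM => //; apply: rpred_nat.
  have -> : 2%:R * P = z + z^* by rewrite zc Ez; ring.
  exact: rpredD.
have [U HU] : exists U : int, (- 22%:R) * Q = U%:~R.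
  apply: int_of; first by apply: rpredM => //; rewrite rpredN; exact: (rpred_nat _ 22).
  have -> : (- 22%:R) * Q = s * (z - z^*).
    rewrite zc Ez; have -> : s * (P + Q * s - (P - Q * s)) = 2%:R * Q * s ^+ 2 by ring.
    rewrite s2; ring.
  apply: rpredM; first exact: s_Aint. exact: rpredB.
have [V HV] : exists V : int, (- 44%:R) * Q ^+ 2 = V%:~R.
  apply: int_of; first by apply: rpredM; [rewrite rpredN; exact: (rpred_nat _ 44)| apply: rpredX].
  have -> : (- 44%:R) * Q ^+ 2 = (z - z^*) ^+ 2.
    rewrite zc Ez; have -> : (P + Q * s - (P - Q * s)) ^+ 2 = 4%:R * Q ^+ 2 * s ^+ 2 by ring.
    rewrite s2; ring.
  apply: rpredX; exact: rpredB.
have [N HN] : exists N : int, P ^+ 2 + 11%:R * Q ^+ 2 = N%:~R.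
  apply: int_of.
    by apply: rpredD; [apply: rpredX | apply: rpredM; [apply: rpred_nat | apply: rpredX]].
  have -> : P ^+ 2 + 11%:R * Q ^+ 2 = z * z^*.
    rewrite zc Ez; have -> : (P + Q * s) * (P - Q * s) = P ^+ 2 - Q ^+ 2 * s ^+ 2 by ring.
    rewrite s2; ring.
  exact: rpredM.
have UV : U * U = -11 * V.
  apply: (@intr_inj algC); rewrite !intrM -HU -HV; ring.
have d11 : (11 %| U)%Z.
  have : (11 %| U * U)%Z by apply/dvdzP; exists (- V); lia.
  rewrite !dvdzE abszM Euclid_dvdM //; by case/orP.
have [W HW] : exists W : int, U = W * 11.
  by exists (U %/ 11)%Z; rewrite divzK.
have HQ : 2%:R * Q = (- W)%:~R.
  apply: (@mulfI _ ((- 11%:R))); first by rewrite oppr_eq0 pnatr_eq0.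
  have -> : (- 11%:R) * (2%:R * Q) = (- 22%:R) * Q :> algC by ring.
  rewrite HU HW intrM intrN; ring.
have HNT : 4 * N = T * T + 11 * (W * W).
  apply: (@intr_inj algC); rewrite !(intrM, intrD) -HN.
  have -> : (W%:~R * W%:~R : algC) = (- W)%:~R * (- W)%:~R by rewrite intrN mulrNN.
  rewrite -HT -HQ; ring.
have [a Ha] : exists a : int, T = 2 * a - W.
  exists ((T + W) %/ 2)%Z.
  move: (divz_eq (T + W) 2) (modz_ge0 (T + W) (isT : (2:int) != 0)).
  move: (ltz_pmod (T + W) (isT : (0:int) < 2)).
  move: ((T + W) %/ 2)%Z ((T + W) %% 2)%Z => k r r2 E r0.
  have [r00|r1] : r = 0 \/ r = 1 by lia.
    lia.
  exfalso. subst r.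
  have E' : T = k * 2 + 1 - W by lia.
  subst T. nia.
exists a, (- W).
have hP : P = T%:~R / 2%:R by rewrite -HT; field.
have hQ : Q = (- W)%:~R / 2%:R by rewrite -HQ; field.
rewrite Ez hP hQ Ha /Xg.
have -> : s = 2%:R * Xg - 1 by rewrite /Xg; field.
rewrite /Xg; field. all: try done.
Qed.

Definition Im_ (m : nat) (z : algC) := exists w, ZX w /\ z = Xg ^+ m * w.

Lemma inO_iff z : inO z <-> ZX z.
Proof. split; [exact: inO_ZX | exact: ZX_inO]. Qed.

Lemma inXmO_iff m z : inXmO m z <-> Im_ m z.
Proof.
split; move=> [w [hw ->]]; exists w; split => //; by apply/inO_iff.
Qed.

Lemma Im_ZX m z : Im_ m z -> ZX z.
Proof. move=> [w [hw ->]]; apply: ZX_mul => //; apply: ZX_exp; exact: ZX_X. Qed.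

Lemma Im_0 m : Im_ m 0.
Proof. exists 0; split; [exact: (ZX_int 0) | by rewrite mulr0]. Qed.

Lemma Im_add m z w : Im_ m z -> Im_ m w -> Im_ m (z + w).
Proof.
move=> [u [hu ->]] [v [hv ->]]; exists (u + v); split; [exact: ZX_add | by rewrite mulrDr].
Qed.

Lemma Im_opp m z : Im_ m z -> Im_ m (- z).
Proof. move=> [u [hu ->]]; exists (- u); split; [exact: ZX_opp | by rewrite mulrN]. Qed.

Lemma Im_sub m z w : Im_ m z -> Im_ m w -> Im_ m (z - w).
Proof. by move=> h1 h2; apply: Im_add => //; apply: Im_opp. Qed.

Lemma Im_mulZ m c z : ZX c -> Im_ m z -> Im_ m (c * z).
Proof.
move=> hc [u [hu ->]]; exists (c * u); split; [exact: ZX_mul | by rewrite mulrCA].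
Qed.

Lemma Im_le j k z : (j <= k)%N -> Im_ k z -> Im_ j z.
Proof.
move=> hjk [u [hu ->]]; exists (Xg ^+ (k - j) * u); split.
  by apply: ZX_mul => //; apply: ZX_exp; exact: ZX_X.
by rewrite mulrA -exprD subnKC.
Qed.

Lemma three_X : (3%:R : algC) = Xg * (1 - Xg).
Proof. by rewrite mulrBr mulr1 -expr2 X2 opprB addrC subrK. Qed.

Lemma Im_3 m : Im_ m ((3%:Z ^+ m)%:~R).
Proof.
exists ((1 - Xg) ^+ m); split.
  apply: ZX_exp; apply: ZX_sub; [exact: (ZX_int 1) | exact: ZX_X].
by rewrite rmorphXn /= -exprMn -three_X.
Qed.

Lemma Im_dvd m (d : int) : (3%:Z ^+ m %| d)%Z -> Im_ m d%:~R.
Proof.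
move=> /dvdzP [k ->]; rewrite intrM; apply: Im_mulZ; [exact: ZX_int | exact: Im_3].
Qed.

Lemma Xnz : Xg != 0.
Proof.
apply/eqP => h.
have := @coord0 0 1; rewrite mul1r add0r => /(_ h) [_]; done.
Qed.

Lemma base3 (n : int) : Im_ 1 n%:~R -> (3 %| n)%Z.
Proof.
move=> [w [[a [b ->]] E]].
have : n%:~R + 0%:~R * Xg = (0 * a - 3 * 1 * b)%:~R + (0 * b + 1 * a + 1 * b)%:~R * Xg.
  by rewrite -mulZX mul0r addr0 E expr1 mul1r add0r.
move/coord_inj => [-> _]; apply/dvdzP; exists (- b); lia.
Qed.

Lemma coprimeX k u : ZX u -> Im_ k ((1 - Xg) * u) -> Im_ k u.
Proof.
move=> hu hk.
suff : forall j, (j <= k)%N -> Im_ j u by apply.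
elim=> [|j IH] hj.
  exists u; split => //; by rewrite expr0 mul1r.
have [v [hv Ev]] := IH (ltnW hj).
have [w [hw Ew]] := Im_le _ _ _ hj hk.
exists (v + w); split; first exact: ZX_add.
have -> : u = Xg * u + (1 - Xg) * u by ring.
by rewrite Ew {1}Ev mulrA -exprS mulrDr.
Qed.

Lemma Bm m (n : int) : Im_ m n%:~R -> (3%:Z ^+ m %| n)%Z.
Proof.
elim: m n => [|m IH] n h; first by rewrite expr0 dvd1z.
have /base3 /dvdzP [n' En] := Im_le 1 m.+1 _ isT h.
have h' : Im_ m ((1 - Xg) * n'%:~R).
  move: h => [w [hw Ew]]; exists w; split => //.
  apply: (mulfI Xnz); rewrite mulrA -three_X mulrA -exprS -Ew En intrM mulrC.
  by [].
have /IH /dvdzP [k Ek] := coprimeX _ _ (ZX_int n') h'.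
by apply/dvdzP; exists k; rewrite En Ek exprSr mulrA.
Qed.

Lemma Im1_one_minus m : Im_ 1 (1 - (1 - Xg) ^+ m).
Proof.
elim: m => [|m IH]; first by rewrite expr0 subrr; exact: Im_0.
have -> : 1 - (1 - Xg) ^+ m.+1 = (1 - (1 - Xg) ^+ m) + Xg ^+ 1 * (1 - Xg) ^+ m.
  by rewrite exprS expr1; ring.
apply: Im_add => //; exists ((1 - Xg) ^+ m); split => //.
apply: ZX_exp; apply: ZX_sub; [exact: (ZX_int 1) | exact: ZX_X].
Qed.

Lemma A_lift m : exists c : int, Im_ m (Xg - c%:~R).
Proof.
elim: m => [|m [c [w [[a [b Ew]] E]]]].
  exists 0; exists Xg; split; [exact: ZX_X | by rewrite expr0 mul1r subr0].
have [w'' [hw'' E'']] : Im_ 1 (w - (1 - Xg) ^+ m * a%:~R).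
  have -> : w - (1 - Xg) ^+ m * a%:~R = a%:~R * (1 - (1 - Xg) ^+ m) + b%:~R * Xg.
    by rewrite Ew; ring.
  apply: Im_add; first by apply: Im_mulZ; [exact: ZX_int | exact: Im1_one_minus].
  by exists b%:~R; split; [exact: ZX_int | rewrite expr1 mulrC].
exists (c + 3%:Z ^+ m * a); exists w''; split => //.
have -> : Xg ^+ m.+1 * w'' = Xg ^+ m * (Xg ^+ 1 * w'') by rewrite mulrA -exprD addn1.
rewrite -E''.
have h3 : ((3%:Z)%:~R : algC) = Xg * (1 - Xg) by rewrite -three_X.
rewrite intrD intrM rmorphXn /= h3 exprMn mulrBr -E.
ring.
Qed.

Lemma repr_ex m z : ZX z -> exists n : int, Im_ m (z - n%:~R).
Proof.
move=> [a [b ->]]; have [c hc] := A_lift m.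
exists (a + b * c).
have -> : a%:~R + b%:~R * Xg - (a + b * c)%:~R = b%:~R * (Xg - c%:~R) :> algC.
  rewrite intrD intrM; ring.
by apply: Im_mulZ => //; exact: ZX_int.
Qed.

Lemma Im_uniq m z (n1 n2 : int) :
  Im_ m (z - n1%:~R) -> Im_ m (z - n2%:~R) -> (3%:Z ^+ m %| n1 - n2)%Z.
Proof.
move=> h1 h2; apply: Bm.
have -> : (n1 - n2)%:~R = (z - n2%:~R) - (z - n1%:~R) :> algC by rewrite intrB; ring.
exact: Im_sub.
Qed.

Definition fO (x : nat -> algC) (m : nat) : int :=
  epsilon (inhabits 0%R) (fun n : int => Im_ m (x m - n%:~R)).

Lemma fO_spec x m : ZX (x m) -> Im_ m (x m - (fO x m)%:~R).
Proof.
move=> h; rewrite /fO; apply: (epsilon_spec (inhabits 0%R) (fun n : int => Im_ m (x m - n%:~R))).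
exact: repr_ex.
Qed.

Lemma compatO_ZX x m : compatO x -> ZX (x m).
Proof. by move=> [h _]; apply/inO_iff. Qed.

Lemma compatO_Im x m : compatO x -> Im_ m (x m.+1 - x m).
Proof. by move=> [_ h]; apply/inXmO_iff. Qed.

Lemma f_iso : lim_ring_iso fO.
Proof.
split.
  move=> x hx m.
  have h1 := Im_le m m.+1 _ (leqnSn m) (fO_spec x m.+1 (compatO_ZX x m.+1 hx)).
  have h0 := fO_spec x m (compatO_ZX x m hx).
  apply: (Im_uniq m (x m.+1)) => //.
  have -> : x m.+1 - (fO x m)%:~R = (x m.+1 - x m) + (x m - (fO x m)%:~R) by ring.
  apply: Im_add => //; exact: compatO_Im.
split.
  move=> x y hx hy hxy m.
  apply: (Im_uniq m (x m)); first exact: fO_spec (compatO_ZX x m hx).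
  have -> : x m - (fO y m)%:~R = (x m - y m) + (y m - (fO y m)%:~R) by ring.
  apply: Im_add; first exact/inXmO_iff.
  exact: fO_spec (compatO_ZX y m hy).
split.
  move=> x y hx hy m.
  have hs : ZX (x m + y m) by apply: ZX_add; apply: compatO_ZX.
  apply: (Im_uniq m (x m + y m)); first exact: (fO_spec (fun m => x m + y m) m hs).
  have -> : x m + y m - (fO x m + fO y m)%:~R
     = (x m - (fO x m)%:~R) + (y m - (fO y m)%:~R) by rewrite intrD; ring.
  by apply: Im_add; apply: fO_spec; apply: compatO_ZX.
split.
  move=> x y hx hy m.
  have hs : ZX (x m * y m) by apply: ZX_mul; apply: compatO_ZX.
  apply: (Im_uniq m (x m * y m)); first exact: (fO_spec (fun m => x m * y m) m hs).
  have -> : x m * y m - (fO x m * fO y m)%:~R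
     = y m * (x m - (fO x m)%:~R) + (fO x m)%:~R * (y m - (fO y m)%:~R) by rewrite intrM; ring.
  apply: Im_add; apply: Im_mulZ.
  - exact: compatO_ZX.
  - by apply: fO_spec; apply: compatO_ZX.
  - exact: ZX_int.
  - by apply: fO_spec; apply: compatO_ZX.
split.
  move=> m.
  apply: (Im_uniq m 1); first exact: (fO_spec (fun _ => 1) m (ZX_int 1)).
  rewrite /= subrr; exact: Im_0.
split.
  move=> x y hx hy hxy m; apply/inXmO_iff.
  have -> : x m - y m = (x m - (fO x m)%:~R) - (y m - (fO y m)%:~R)
     + (fO x m - fO y m)%:~R by rewrite intrB; ring.
  apply: Im_add; last by apply: Im_dvd; apply: hxy.
  by apply: Im_sub; apply: fO_spec; apply: compatO_ZX.
move=> z hz.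
exists (fun m => (z m)%:~R).
  split => m; first by apply/inO_iff; exact: ZX_int.
  apply/inXmO_iff; rewrite -intrB; apply: Im_dvd; exact: hz.
move=> m.
apply: (Im_uniq m (z m)%:~R); first exact: (fO_spec (fun m => (z m)%:~R) m (ZX_int _)).
rewrite subrr; exact: Im_0.
Qed.

Lemma normdec (a b d e : int) : (d = -1 \/ d = 0 \/ d = 1) -> a = d - 3 * e ->
  (a <> 0 \/ b <> 0) ->
  (b - e) * (b - e) + (b - e) * e + 3 * e * e < a * a + a * b + 3 * b * b.
Proof.
move=> hd ha hab.
have h1 : 0 <= b * (b + 1) by nia.
have h2 : 0 <= e * (e - 1) by nia.
have h3 : 0 <= b * (b - 1) by nia.
have h4 : 0 <= e * (e + 1) by nia.
subst a; case: hd => [|[|]] hd; subst d.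
- have [he|[he|he]] : e >= 0 \/ e = -1 \/ e <= -2 by lia.
  + nia.
  + subst e; nia.
  + nia.
- have h5 : 0 <= (b - e) * (b - e) by rewrite -expr2 sqr_ge0.
  have [he|he|he] := ltgtP e 0.
  + nia.
  + nia.
  + subst e; have [hb|hb|hb] := ltgtP b 0.
    * nia.
    * nia.
    * subst b; lia.
- have [he|[he|he]] : e <= 0 \/ e = 1 \/ e >= 2 by lia.
  + nia.
  + subst e; nia.
  + nia.
Qed.

Lemma Nge0 (a b : int) : 0 <= a * a + a * b + 3 * b * b.
Proof.
have h1 : 0 <= (2 * a + b) * (2 * a + b) by rewrite -expr2 sqr_ge0.
have h2 : 0 <= b * b by rewrite -expr2 sqr_ge0.
nia.
Qed.

Lemma evalX_nil : evalX [::] = 0.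
Proof. by rewrite /evalX big_ord0. Qed.

Lemma evalX_cons d s : evalX (d :: s) = d%:~R + Xg * evalX s.
Proof.
rewrite /evalX /= big_ord_recl /= expr0 mulr1; congr (_ + _).
rewrite mulr_sumr; apply: eq_bigr => i _.
by rewrite exprS mulrCA.
Qed.

Lemma evalX_ZX s : ZX (evalX s).
Proof.
elim: s => [|d s IH]; first by rewrite evalX_nil; exact: (ZX_int 0).
rewrite evalX_cons; apply: ZX_add; first exact: ZX_int.
apply: ZX_mul => //; exact: ZX_X.
Qed.

Lemma step (a b : int) : (a <> 0 \/ b <> 0) ->
  exists d c e : int, [/\ is_digit d,
    c * c + c * e + 3 * e * e < a * a + a * b + 3 * b * b,
    a%:~R + b%:~R * Xg = d%:~R + Xg * (c%:~R + e%:~R * Xg) &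
    (c = 0 /\ e = 0 -> d != 0)].
Proof.
move=> hab.
move: (divz_eq (a + 1) 3) (modz_ge0 (a + 1) (isT : (3:int) != 0)).
move: (ltz_pmod (a + 1) (isT : (0:int) < 3)).
move: ((a + 1) %/ 3)%Z ((a + 1) %% 3)%Z => q r r3 E r0.
have hd : (r - 1 = -1 \/ r - 1 = 0 \/ r - 1 = 1) by lia.
have ha : a = (r - 1) - 3 * (- q) by lia.
exists (r - 1), (b - - q), (- q); split.
- rewrite /is_digit; case: hd => [|[|]] ->; by rewrite ?eqxx ?orbT.
- exact: (normdec _ _ _ _ hd ha hab).
- have -> : Xg * ((b - - q)%:~R + (- q)%:~R * Xg) = (b - - q)%:~R * Xg + (- q)%:~R * Xg ^+ 2 by ring.
  rewrite X2 {1}ha; ring.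
- move=> [hc he]; apply/eqP => hd0; case: hab; lia.
Qed.

Lemma exist_digits (K : nat) : forall a b : int,
  a * a + a * b + 3 * b * b <= K%:Z ->
  exists s, digit_string s /\ a%:~R + b%:~R * Xg = evalX s.
Proof.
elim: K => [|K IH] a b hN.
  have [ha|ha|ha] := ltgtP a 0; have [hb|hb|hb] := ltgtP b 0;
  try (subst a b; exists [::]; split; [done | by rewrite evalX_nil mul0r addr0]);
  (have [|d [c [e [_ hlt _ _]]]] := step a b; [lia | have := Nge0 c e; lia]).
have [ha|ha|ha] := ltgtP a 0; have [hb|hb|hb] := ltgtP b 0;
  try (subst a b; exists [::]; split; [done | by rewrite evalX_nil mul0r addr0]);
  (have [|d [c [e [hd hlt E hnz]]]] := step a b; [lia | idtac]);
  (have [|s [[hs1 hs2] Es]] := IH c e; [lia | idtac]);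
  exists (d :: s); (split; [split; [by rewrite /= hd hs1 | idtac] | by rewrite evalX_cons -Es]);
  (case: s hs1 hs2 Es => [|y t] hs1 hs2 Es; [idtac | by []]);
  (rewrite evalX_nil in Es; have [hc he] := coord0 c e Es; by apply: hnz).
Qed.

Lemma dig3 d1 d2 : is_digit d1 -> is_digit d2 -> (3 %| d1 - d2)%Z -> d1 = d2.
Proof.
move=> h1 h2 /dvdzP [k Ek].
move: h1 h2; rewrite /is_digit => /or3P [] /eqP h1 /or3P [] /eqP h2; lia.
Qed.

Lemma digit_tail d s : digit_string (d :: s) -> digit_string s.
Proof.
move=> [/= /andP [_ h1] h2]; split => //.
by case: s h1 h2.
Qed.

Lemma zero_digits t : digit_string t -> evalX t = 0 -> t = [::].
Proof.
elim: t => [//|d t IH] ht.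
rewrite evalX_cons => E.
have hd : d = 0.
  apply: (dig3 d 0); first by case: ht => /= /andP [].
    by [].
  apply: base3; exists (- evalX t); split; first by apply: ZX_opp; exact: evalX_ZX.
  rewrite subr0 expr1; apply/eqP; rewrite mulrN -subr_eq0 opprK; exact/eqP.
subst d.
have Et : evalX t = 0.
  have E0 : Xg * evalX t = 0 by rewrite -E; ring.
  by apply/eqP; move/eqP: E0; rewrite mulf_eq0 (negPf Xnz).
have := IH (digit_tail _ _ ht) Et => Ht; subst t.
by case: ht.
Qed.

Lemma uniq_digits s t : digit_string s -> digit_string t -> evalX s = evalX t -> s = t.
Proof.
elim: s t => [|d s IH] t hs ht E.
  by rewrite (zero_digits t ht) // -E evalX_nil.
case: t ht E => [|d' t] ht E.
  by apply: zero_digits => //; rewrite E evalX_nil.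
rewrite !evalX_cons in E.
have hd : d = d'.
  apply: dig3; first by case: hs => /= /andP [].
    by case: ht => /= /andP [].
  apply: base3; exists (evalX t - evalX s); split.
    by apply: ZX_sub; exact: evalX_ZX.
  rewrite expr1 mulrBr intrB.
  apply/eqP; rewrite -subr_eq0; apply/eqP.
  have -> : d%:~R - d'%:~R - (Xg * evalX t - Xg * evalX s)
    = (d%:~R + Xg * evalX s) - (d'%:~R + Xg * evalX t) :> algC by ring.
  by rewrite E subrr.
subst d'; congr (_ :: _).
apply: IH; [exact: digit_tail _ _ hs | exact: digit_tail _ _ ht |].
by apply: (mulfI Xnz); apply: (addrI d%:~R).
Qed.

Theorem proposition6p6 :
  (* (i) X is an S[+-1]-generator of O, with hold 1 + 1 = -1 + X - X^2 *)
  (spm1_generator /\ (1 + 1 : algC) = evalX [:: -1; 1; -1]) /\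
  (* (ii) lim_m O / X^m O is (isomorphic as a ring to) Z_3 = W(F_3) *)
  (exists f : (nat -> algC) -> (nat -> int), lim_ring_iso f).
Proof.
split; last by exists fO; exact: f_iso.
split.
- split; first exact: (ZX_inO _ ZX_X).
  split; first by move=> s _; apply: ZX_inO; exact: evalX_ZX.
  move=> z /inO_ZX [a [b Ez]].
  have hK : a * a + a * b + 3 * b * b <= (absz (a * a + a * b + 3 * b * b))%:Z.
    by rewrite abszE ger0_norm ?Nge0.
  have [s [hs Es]] := exist_digits _ a b hK.
  exists s; split; first by split => //; rewrite Ez.
  move=> t [ht Et]; apply: uniq_digits => //; by rewrite -Es -Ez.
- rewrite !evalX_cons evalX_nil.
  have -> : ((-1)%:~R + Xg * (1%:~R + Xg * ((-1)%:~R + Xg * 0)) : algC)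
     = -1 + Xg - Xg ^+ 2 by ring.
  rewrite X2; ring.
Qed.
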